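(* Let $(\Omega,\mathcal F,\mu)$ be a measure space, $p\in[1,\infty]$ and $k\ge1$. Then $\mathscr G_{p,k}$ is a closed subset of $L^p(\Omega,\mathcal F,\mu)$.
   Context: All measures are assumed not identically zero. $\mathscr G_{p,k}$ is the set of functions $\sum_{i=1}^l a_i\mathbf 1_{A_i}$ that belong to $L^p(\Omega,\mathcal F,\mu)$, with $l\le k$, $\{A_i\}$ a measurable partition of $\Omega$, $a_i\in\mathbb R$ (viewed as a subset of $L^p$, i.e. up to $\mu$-a.e. equality). *)

(* Defs.v *)
From HB Require Import structures.
From mathcomp Require Import all_boot all_order all_algebra.
From mathcomp Require Import all_classical all_reals all_analysis.
Set Implicit Arguments. Unset Strict Implicit. Unset Printing Implicit Defensive.
Import Order.TTheory GRing.Theory Num.Theory.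
Import numFieldNormedType.Exports.
Local Open Scope classical_set_scope.
Local Open Scope ring_scope.

Definition measurable_partition d (T : measurableType d) (l : nat)
    (A : 'I_l -> set T) : Prop :=
  [/\ forall i, measurable (A i),
      forall i j, i != j -> A i `&` A j = set0 &
      \bigcup_(i in [set: 'I_l]) A i = [set: T]].

Definition step_fun d (T : measurableType d) (R : realType) (l : nat)
    (a : 'I_l -> R) (A : 'I_l -> set T) : T -> R :=
  fun x => \sum_(i < l) a i * \1_(A i) x.

(* G_{p,k}, as a set of functions T -> R; a function belongs to it when its
   L^p class (mu-a.e. equality class) contains a step function
   sum_{i<l} a_i 1_{A_i}, l <= k, {A_i} a measurable partition, lying in L^p. *)
Definition Gpk d (T : measurableType d) (R : realType)
    (mu : {measure set T -> \bar R}) (p : \bar R) (k : nat) : set (T -> R) :=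
  [set f | f \in Lfun mu p /\
     exists (l : nat) (a : 'I_l -> R) (A : 'I_l -> set T),
       [/\ (l <= k)%N, measurable_partition A,
           step_fun a A \in Lfun mu p &
           f = step_fun a A %[ae mu]]].

(* A set S of L^p functions (closed under a.e. equality) is closed in L^p
   (for the L^p (pseudo)metric d(f,g) = N_p[f - g]) iff it contains every
   L^p function adherent to it. *)
Definition Lp_closed d (T : measurableType d) (R : realType)
    (mu : {measure set T -> \bar R}) (p : \bar R) (S : set (T -> R)) : Prop :=
  forall f : T -> R, f \in Lfun mu p ->
    (forall e : R, 0 < e ->
       exists g : T -> R, S g /\ (Lnorm mu p (fun x => EFin (f x - g x)%R) < EFin e)%E) ->
    S f.

(* Main.v *)
Require Import Defs.
From HB Require Import structures.
From mathcomp Require Import all_boot all_order all_algebra.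
From mathcomp Require Import all_classical all_reals all_analysis.
From mathcomp Require Import ring lra.
Import Order.TTheory GRing.Theory Num.Theory.
Import numFieldNormedType.Exports.
Import measurable_realfun ess_sup_inf.
Local Open Scope classical_set_scope.
Local Open Scope ring_scope.
Lemma measurable_step d (T : measurableType d) (R : realType) l (a : 'I_l -> R) (A : 'I_l -> set T) :
  (forall i, measurable (A i)) -> measurable_fun setT (step_fun a A).
Proof.
move=> mA; apply: measurable_sum => i.
apply: measurable_funM => //; exact: measurable_indic.
Qed.

Lemma Lnorm_ae d (T : measurableType d) (R : realType) (mu : {measure set T -> \bar R}) p (f g : T -> R) :
  measurable_fun setT f -> measurable_fun setT g -> f = g %[ae mu] ->
  Lnorm mu p (EFin \o f) = Lnorm mu p (EFin \o g).
Proof.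
move=> mf mg fg; rewrite unlock; case: p => [r| |] /=.
- congr (_ `^ _)%E; apply: ae_eq_integral => //.
  + apply/measurable_EFinP; apply: (measurableT_comp (measurable_powR r)).
    exact: measurableT_comp.
  + apply/measurable_EFinP; apply: (measurableT_comp (measurable_powR r)).
    exact: measurableT_comp.
  + by apply: filterS fg => x h _; rewrite /= h.
- case: ifPn => // _; apply: eq_ess_sup; by apply: filterS fg => x h; rewrite /= h.
- case: ifPn => // _; apply: eq_ess_inf; by apply: filterS fg => x h; rewrite /= h.
Qed.

Lemma cover_seq (X : eqType) k (S : set X) :
 (forall s : seq X, uniq s -> (forall x, x \in s -> S x) -> (size s <= k)%N) ->
 exists a : seq X, (size a <= k)%N /\ forall x, S x -> x \in a.
Proof.
elim: k S => [|k IH] S H.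
  exists [::]; split => // x Sx; exfalso.
  suff: (size [:: x] <= 0)%N by []. by apply: H => // y; rewrite mem_seq1 => /eqP ->.
have [[x0 Sx0]|S0] := pselect (exists x, S x); last first.
  by exists [::]; split => // x Sx; exfalso; apply: S0; exists x.
have [a [sa ca]] : exists a : seq X, (size a <= k)%N /\ forall x, (S x /\ x != x0) -> x \in a.
  apply: IH => s us sS; suff: (size (x0 :: s) <= k.+1)%N by []; apply: H.
  - rewrite /= us andbT; apply/negP => /sS [_]; by rewrite eqxx.
  - by move=> x; rewrite in_cons => /orP[/eqP ->//|/sS[]].
exists (x0 :: a); split => // x Sx; rewrite in_cons.
by have [//|xx0] := eqVneq x x0; rewrite ca.
Qed.

Lemma measD d (T : measurableType d) (R : realType) (f g : T -> R) (δ : R) :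
  measurable_fun setT f -> measurable_fun setT g ->
  measurable [set x | δ <= `|f x - g x|].
Proof.
move=> mf mg.
have m : measurable_fun setT (fun x => `|f x - g x|).
  apply: measurableT_comp => //; exact: measurable_funB.
have := m measurableT `[δ, +oo[%classic (measurable_itv _).
rewrite setTI; congr measurable; apply/seteqP; split => x /=;
  by rewrite in_itv /= andbT.
Qed.

Lemma step_at d (T : measurableType d) (R : realType) l (a : 'I_l -> R) (A : 'I_l -> set T) i x :
  measurable_partition A -> A i x -> step_fun a A x = a i.
Proof.
move=> [_ disj _] Aix; rewrite /step_fun (bigD1 i)//= indicE mem_set// mulr1.
rewrite big1 ?addr0// => j ji; rewrite indicE memNset ?mulr0//.
move=> Ajx; have := disj _ _ ji; rewrite -subset0 => /(_ x); apply; by split.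
Qed.

Lemma fin_lb (R : realType) (I : finType) (P : I -> R -> Prop) :
  (forall i x y, 0 < x -> x <= y -> P i y -> P i x) ->
  (forall i, exists t, 0 < t /\ P i t) -> exists t, 0 < t /\ forall i, P i t.
Proof.
move=> Pdown /choice[h hP].
exists (\big[Order.min/1]_i h i); split.
  by apply: lt_bigmin => // i _; case: (hP i).
move=> i; case: (hP i) => h0 Ph; apply: Pdown Ph.
  by apply: lt_bigmin => // j _; case: (hP j).
exact: bigmin_le.
Qed.

Lemma key d (T : measurableType d) (R : realType) (mu : {measure set T -> \bar R}) (p : \bar R) k
  (f : T -> R) : measurable_fun setT f ->
  (forall δ t : R, 0 < δ -> 0 < t -> exists g, Gpk mu p k g /\ (mu [set x | (δ <= `|f x - g x|)%R] < t%:E)%E) ->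
  forall (B : 'I_k.+1 -> set T) (c : 'I_k.+1 -> R) (δ : R),
  0 < δ -> (forall j, measurable (B j)) -> (forall j, (0 < mu (B j))%E) ->
  (forall j x, B j x -> `|f x - c j| < δ) ->
  (forall i j, i != j -> 4 * δ <= `|c i - c j|) -> False.
Proof.
move=> mf Happ B c δ δ0 mB B0 Bc csep.
have [t [t0 tB]] : exists t : R, 0 < t /\ forall j, (t%:E <= mu (B j))%E.
  apply: (@fin_lb R _ (fun j t => (t%:E <= mu (B j))%E)).
    by move=> j x y _ xy h; apply: le_trans h; rewrite lee_fin.
  move=> j; have := B0 j; case E: (mu (B j)) => [m| |] //.
    by rewrite lte_fin => m0; exists m; split.
  by move=> _; exists 1; split => //; rewrite leey.
have [g [[gL [l [a [A [lk part stepL gae]]]]] Hg]] := Happ δ t δ0 t0.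
have mg : measurable_fun setT g by move: (sub_Lfun_mfun gL); rewrite inE.
have [N [mN N0 subN]] := gae.
have mD := @measD _ _ _ f g δ mf mg.
have ey : forall j, exists y, [/\ B j y, `|f y - g y| < δ & ~ N y].
  move=> j; apply: contrapT => hne.
  have sub : B j `<=` [set x | (δ <= `|f x - g x|)%R] `|` N.
    move=> x Bx; apply: contrapT => /not_orP [nD nN]; apply: hne; exists x.
    by split => //; move/negP: nD; rewrite -ltNge.
  have := le_measure mu (mem_set (mB j)) (mem_set (measurableU _ _ mD mN)) sub.
  move=> /le_trans /(_ (measureU2 mu mD mN)).
  have e : (mu [set x | (δ <= `|f x - g x|)%R] + mu N = mu [set x | (δ <= `|f x - g x|)%R])%E.
    by rewrite N0 adde0.
  rewrite e => /le_lt_trans /(_ Hg) /lt_le_trans /(_ (tB j)).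
  by rewrite ltxx.
have [y yP] := choice ey.
have ei : forall j, exists i, A i (y j).
  move=> j; case: part => _ _ cov.
  have : [set: T] (y j) by [].
  by rewrite -cov => -[i _ Ai]; exists i.
have [io ioP] := choice ei.
have close : forall j, `|a (io j) - c j| < 2 * δ.
  move=> j; have [By fg nN] := yP j.
  have gs : g (y j) = a (io j).
    rewrite -(@step_at _ _ _ _ a A _ _ part (ioP j)); apply: contrapT => ne; apply: nN; apply: subN.
    by move=> /(_ I).
  have h1 := Bc j _ By.
  have e : a (io j) - c j = (f (y j) - c j) - (f (y j) - g (y j)) by rewrite gs; ring.
  rewrite e; apply: (le_lt_trans (ler_normB _ _)); lra.
have inj : injective io.
  move=> i j eij; apply/eqP; apply: contraT => nij.
  have := csep _ _ nij; have := close i; have := close j; rewrite eij => h1 h2.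
  have e : c i - c j = (a (io j) - c j) - (a (io j) - c i) by ring.
  rewrite e => h3; have := le_trans h3 (ler_normB _ _); lra.
have := leq_card io inj; rewrite !card_ord => h.
by have := leq_trans h lk; rewrite ltnn.
Qed.

Lemma cheb d (T : measurableType d) (R : realType) (mu : {measure set T -> \bar R}) (p : \bar R)
  (f : T -> R) (S : set (T -> R)) :
  mu [set: T] != 0%E -> (1 <= p)%E -> measurable_fun setT f ->
  (forall g, S g -> measurable_fun setT g) ->
  (forall e : R, 0 < e -> exists g, S g /\ (Lnorm mu p (fun x => (f x - g x)%R%:E) < e%:E)%E) ->
  forall δ t : R, 0 < δ -> 0 < t -> exists g, S g /\ (mu [set x | (δ <= `|f x - g x|)%R] < t%:E)%E.
Proof.
move=> mu0 p1 mf mS H δ t δ0 t0.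
case: p p1 H => [r| |] //; rewrite ?lee_fin => r1 H.
- have r0 : 0 < r by apply: lt_le_trans r1.
  pose t' := Order.min t 1 / 2.
  have t'0 : 0 < t' by rewrite divr_gt0 // lt_min t0 ltr01.
  have m1 : Num.min t 1 <= 1 by rewrite ge_min lexx orbT.
  have mt : Num.min t 1 <= t by rewrite ge_min lexx.
  have t'1 : t' < 1 by rewrite /t'; lra.
  have t't : t' < t by rewrite /t'; lra.
  have [g [Sg Hg]] := H (δ * t') (mulr_gt0 δ0 t'0).
  exists g; split => //.
  have mg := mS g Sg.
  set h := (fun x => (f x - g x)%:E) in Hg *.
  have mh : measurable_fun setT h by apply/measurable_EFinP; exact: measurable_funB.
  have H1 := @le_integral_comp_abse _ _ _ mu setT measurableT h δ (poweR ^~ r)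
    (measurable_poweR r) (fun x _ => poweR_ge0 x r) _ mh δ0.
  have mono : forall x y : \bar R, x \in `[0%E, +oo[%classic -> y \in `[0%E, +oo[%classic ->
     (x <= y)%E -> (x `^ r <= y `^ r)%E.
    move=> x y hx hy xy; apply: (@gt0_ler_poweR R r (ltW r0) x y) => //.
    + by move: hx; rewrite inE /= !in_itv /= leey andbT => ->.
    + by move: hy; rewrite inE /= !in_itv /= leey andbT => ->.
  have {H1 mono} H1 := H1 mono.
  rewrite -poweR_Lnorm ?gt_eqF // setTI in H1.
  have eD : [set x | (δ%:E <= `|h x|)%E] = [set x | (δ <= `|f x - g x|)%R].
    by apply/seteqP; split => x /=; rewrite lee_fin.
  rewrite eD in H1.
  have N0 := Lnorm_ge0 mu r%:E h.
  have Nfin : Lnorm mu r%:E h \is a fin_num.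
    by rewrite ge0_fin_numE // (lt_le_trans Hg) // leey.
  move: Hg H1 N0; rewrite -(fineK Nfin); set n := fine _ => Hg H1 N0.
  rewrite !poweR_EFin in H1; rewrite lte_fin in Hg; rewrite lee_fin in N0.
  have d0 : 0 < δ `^ r by apply: powR_gt0.
  have h2 : n `^ r < δ `^ r * t'.
    apply: (@lt_le_trans _ _ ((δ * t') `^ r)).
      by apply: (gt0_ltr_powR r0) => //; rewrite nnegrE (mulr_ge0 (ltW δ0) (ltW t'0)).
    rewrite powRM; [|exact: ltW|exact: ltW]; rewrite ler_pM2l //.
    by apply: ge1r_powR => //; rewrite t'0 ltW.
  move: H1; set D := mu _; case ED : D => [m| |] H1.
  - rewrite lte_fin; move: H1; rewrite -EFinM lee_fin => H1.
    have : δ `^ r * m < δ `^ r * t' by apply: le_lt_trans h2.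
    by rewrite ltr_pM2l // => /lt_trans; apply.
  - by move: H1; rewrite gt0_muley ?lte_fin // leye_eq.
  - by rewrite ltNyr.
- have [g [Sg Hg]] := H δ δ0; exists g; split => //.
  have mg := mS g Sg.
  have muT : (0 < mu [set: T])%E by rewrite lt0e mu0 measure_ge0.
  rewrite unlock /= muT in Hg.
  have [N [mN N0 sub]] := ess_sup_ge mu (abse \o (fun x => (f x - g x)%:E)).
  have DN : [set x | (δ <= `|f x - g x|)%R] `<=` N.
    move=> x /= dx; apply: sub => /= hx.
    have := le_lt_trans hx Hg; rewrite /= lte_fin => /(le_lt_trans dx).
    by rewrite ltxx.
  have := le_measure mu (mem_set (@measD _ _ _ f g δ mf mg)) (mem_set mN) DN. move=> H2; apply: le_lt_trans H2 _; by apply: (@le_lt_trans _ _ 0%E); [rewrite -N0|rewrite lte_fin].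
Qed.

Lemma measI d (T : measurableType d) (R : realType) (f : T -> R) (r s : R) :
  measurable_fun setT f -> measurable [set x | `|f x * r - s| < 1].
Proof.
move=> mf.
have m : measurable_fun setT (fun x => `|f x * r - s|).
  apply: measurableT_comp => //; apply: measurable_funB => //.
  exact: measurable_funM.
have := m measurableT `]-oo, 1[%classic (measurable_itv _).
rewrite setTI; congr measurable; apply/seteqP; split => x /=;
  by rewrite in_itv /=.
Qed.

Theorem corollary2p14 (d : measure_display) (T : measurableType d)
    (R : realType) (mu : {measure set T -> \bar R}) (p : \bar R) (k : nat) :
  mu [set: T] != 0%E -> (1 <= p)%E -> (1 <= k)%N ->
  Lp_closed mu p (Gpk mu p k).
Proof.
move=> mu0 p1 k1 f fL Happ.
have mf : measurable_fun setT f by move: (sub_Lfun_mfun fL); rewrite inE.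
have mS : forall g, Gpk mu p k g -> measurable_fun setT g.
  by move=> g [gL _]; move: (sub_Lfun_mfun gL); rewrite inE.
have Happ' := @cheb _ _ _ mu p f _ mu0 p1 mf mS Happ.
have keyf := @key _ _ _ mu p k f mf Happ'.
pose I (m : nat) (z : int) := [set y : R | `|y * (m.+1)%:R - z%:~R| < 1].
have mI : forall m z, measurable (f @^-1` I m z).
  by move=> m z; exact: measI.
pose F (n : nat) := [set x | exists m z, unpickle n = Some (m, z) /\
   mu (f @^-1` I m z) = 0%E /\ I m z (f x)].
have [N [mN N0 subN]] : mu.-negligible (\bigcup_n F n).
  apply: negligible_bigcup => n.
  case E: (unpickle n : option (nat * int)) => [[m z]|]; last first.
    by exists set0; split => // x [m [z [+ _]]]; rewrite E.
  have [h0|h0] := pselect (mu (f @^-1` I m z) = 0%E).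
    exists (f @^-1` I m z); split => // x [m' [z' [+ [_ Ix]]]].
    by rewrite E => -[-> ->].
  exists set0; split => // x [m' [z' [+ [h0' _]]]].
  by rewrite E => -[em ez]; apply: h0; rewrite em ez.
have hS : forall s : seq R, uniq s -> (forall v, v \in s -> exists x, ~ N x /\ f x = v) ->
    (size s <= k)%N.
  move=> s us sS; rewrite leqNgt; apply/negP => ks.
  pose s' := take k.+1 s.
  have us' : uniq s' by rewrite take_uniq.
  have ss' : size s' = k.+1.
    by rewrite size_take; case: ltnP => // h; apply/eqP; rewrite eqn_leq h ks.
  pose c (j : 'I_k.+1) := nth 0 s' j.
  have cmem : forall j, c j \in s.
    move=> j; apply: (@mem_take k.+1); apply: mem_nth; by rewrite ss'.
  have [xs xsP] := choice (fun j => sS (c j) (cmem j)).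
  have cdist : forall i j, i != j -> c i != c j.
    move=> i j; apply: contraNN; rewrite /c nth_uniq ?ss' //.
  have [δ [δ0 δsep]] : exists δ : R, 0 < δ /\ forall ij : ('I_k.+1 * 'I_k.+1)%type,
      ij.1 != ij.2 -> 4 * δ <= `|c ij.1 - c ij.2|.
    apply: (@fin_lb R _ (fun ij t => ij.1 != ij.2 -> 4 * t <= `|c ij.1 - c ij.2|)).
    - move=> [i j] x y x0 xy /= h ne; apply: le_trans (h ne); rewrite ler_pM2l //.
    - move=> [i j] /=; case: (eqVneq i j) => [->|ne].
        by exists 1; split => //; rewrite eqxx.
      exists (`|c i - c j| / 4); split.
        by rewrite divr_gt0 // normr_gt0 subr_eq0 cdist.
      by move=> _; rewrite mulrC divfK.
  pose m := Num.trunc (2 / δ).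
  pose M : R := (m.+1)%:R.
  have M0 : 0 < M by rewrite /M ltr0n.
  have hm : 2 < δ * M.
    have := truncnS_gt (2 / δ); rewrite -/m -/M => h.
    by rewrite ltr_pdivrMr // mulrC in h.
  pose z (j : 'I_k.+1) := Num.floor (c j * M).
  have hz : forall j, `|c j * M - (z j)%:~R| < 1.
    move=> j; have h1 := floor_le (c j * M); have h2 := floorD1_gt (c j * M).
    rewrite intrD in h2; rewrite ltr_norml; apply/andP; split; rewrite /z; lra.
  apply: (keyf (fun j => f @^-1` I m (z j)) c δ δ0).
  - by move=> j; exact: mI.
  - move=> j; rewrite lt0e measure_ge0 andbT; apply/negP => /eqP h0.
    have [nN fx] := xsP j; apply: nN; apply: subN.
    exists (pickle (m, z j)) => //; exists m, (z j); split; first by rewrite pickleK.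
    by split => //; rewrite /I /= fx; exact: hz.
  - move=> j x /= Ix.
    have hzj := hz j; have Ix' : `|f x * M - (z j)%:~R| < 1 := Ix.
    have e : (f x - c j) * M = (f x * M - (z j)%:~R) - (c j * M - (z j)%:~R) by ring.
    have h3 : `|(f x - c j) * M| < δ * M.
      rewrite e; apply: (le_lt_trans (ler_normB _ _)); lra.
    by rewrite normrM (gtr0_norm M0) ltr_pM2r in h3.
  - by move=> i j ne; exact: (δsep (i, j) ne).
have [a0 [sa0 ca0]] := @cover_seq R k [set v | exists x, ~ N x /\ f x = v] hS.
pose a := undup a0.
have ua : uniq a := undup_uniq a0.
have sa : (size a <= k)%N := leq_trans (size_undup a0) sa0.
have fa : forall x, ~ N x -> f x \in a.
  by move=> x nN; rewrite mem_undup; apply: ca0; exists x.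
pose A (i : 'I_k) := (if (i == 0 :> nat) then N else set0) `|`
   (if (i < size a)%N then ~` N `&` f @^-1` [set nth 0 a i] else set0).
have Ainv : forall i x, A i x -> (N x /\ (i == 0 :> nat)) \/
    (~ N x /\ (i < size a)%N /\ f x = nth 0 a i).
  move=> i x; rewrite /A; case: ifP => i0; case: ifP => ia [] //= h.
  - by left; split.
  - right; case: h => h1 h2; do !split => //.
  - by left; split.
  - right; case: h => h1 h2; do !split => //.
pose idx (x : T) (nN : ~ N x) : 'I_k :=
  Ordinal (leq_trans (eqbRL (index_mem (f x) a) (fa x nN)) sa).
have Aidx : forall x (nN : ~ N x), A (idx x nN) x.
  move=> x nN; right; rewrite /= index_mem fa //; split => //.
  by rewrite /= nth_index // fa.
have part : measurable_partition A.
  split.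
  - move=> i; apply: measurableU; case: ifP => _ //.
    apply: measurableI; first exact: measurableC.
    by have := mf measurableT [set nth 0 a i] (measurable_set1 _); rewrite setTI.
  - move=> i j ij; apply/seteqP; split => x //= [/Ainv Ai /Ainv Aj].
    case: Ai => [[Nx i0]|[nN [ia fi]]]; case: Aj => [[Nx' j0]|[nN' [ja fj]]] //.
    + by move: ij; rewrite -(inj_eq val_inj) /= (eqP i0) (eqP j0).
    + move: ij; rewrite -(inj_eq val_inj) /= -(nth_uniq 0 ia ja ua) -fi -fj.
      by rewrite eqxx.
  - apply/seteqP; split => x // _.
    have [Nx|nN] := pselect (N x).
      by exists (Ordinal k1) => //; left; rewrite /=.
    by exists (idx x nN) => //; exact: Aidx.
pose α (i : 'I_k) := nth 0 a i.
have stepf : forall x, ~ N x -> step_fun α A x = f x.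
  move=> x nN; rewrite (@step_at _ _ _ _ α A _ _ part (Aidx x nN)) /α /=.
  by rewrite nth_index // fa.
have aeq : f = step_fun α A %[ae mu].
  exists N; split => // x /= h; apply: contrapT => nN; apply: h => _.
  by rewrite stepf.
have mstep : measurable_fun setT (step_fun α A).
  by apply: measurable_step; case: part.
split => //; exists k, α, A; split => //.
apply/andP; split; first by rewrite inE.
move: (sub_Lfun_finLfun fL); rewrite !inE /finite_norm /=.
by rewrite (@Lnorm_ae _ _ _ mu p _ _ mf mstep aeq).
Qed.
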